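(* Let $n,m,k,l\ge0$ with $n+m=k+l$, and let $w_1,\dots,w_p$, where $p=\min(n,m,k,l)+1$, be the minimal length representatives of the double cosets $(S_k\times S_l)\backslash S_{n+m}/(S_n\times S_m)$. Then $A_{n+m}$, as an $(A_k\otimes A_l,A_n\otimes A_m)$-bimodule (via $\gamma_{k,l}$ on the left and $\gamma_{n,m}$ on the right), is isomorphic to the direct sum of the sub-bimodules of $A_{n+m}$ generated by $Y_{w_1},\dots,Y_{w_p}$.
   Context: $A_j$ is the nilCoxeter algebra: the unital $\mathbb{Q}$-algebra generated by $Y_1,\dots,Y_{j-1}$ with relations $Y_i^2=0$, $Y_iY_r=Y_rY_i$ for $|i-r|>1$, $Y_iY_{i+1}Y_i=Y_{i+1}Y_iY_{i+1}$. For $w\in S_j$ with reduced expression $w=s_{i_1}\cdots s_{i_r}$, $Y_w=Y_{i_1}\cdots Y_{i_r}$ (well defined). $\gamma_{a,b}:A_a\otimes A_b\to A_{a+b}$ is given by $\gamma_{a,b}(Y_i\otimes1)=Y_i$, $\gamma_{a,b}(1\otimes Y_i)=Y_{a+i}$; $S_a\times S_b\subset S_{a+b}$ is the standard Young subgroup. *)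

(* Defs.v *)
From HB Require Import structures.
From mathcomp Require Import all_boot all_order all_fingroup all_algebra.
Set Implicit Arguments. Unset Strict Implicit. Unset Printing Implicit Defensive.
Import GRing.Theory.
Local Open Scope ring_scope.

(* Coxeter length of a permutation = number of inversions. *)
Definition len (N : nat) (s : 'S_N) : nat :=
  #|[set p : 'I_N * 'I_N | (p.1 < p.2)%N && (s p.2 < s p.1)%N]|.

(* The nilCoxeter algebra A_N over Q, realized on its standard basis
   {Y_w : w in S_N}: elements are Q-valued functions on S_N. *)
Definition A (N : nat) := {ffun 'S_N -> rat^o}.

Definition Y (N : nat) (w : 'S_N) : A N := [ffun u => (u == w)%:R].

(* Product: Y_u Y_v = Y_{uv} if len(uv) = len u + len v, and 0 otherwise. *)
Definition mulA (N : nat) (x y : A N) : A N :=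
  [ffun w => \sum_(u : 'S_N) \sum_(v : 'S_N | (u * v == w)%g &&
                 (len w == len u + len v)%N) x u * y v].

Definition sumf a b (u : 'S_a) (v : 'S_b) (s : 'I_a + 'I_b) : 'I_a + 'I_b :=
  match s with inl j => inl (u j) | inr j => inr (v j) end.

Definition prodfun a b (u : 'S_a) (v : 'S_b) (i : 'I_(a + b)) : 'I_(a + b) :=
  unsplit (sumf u v (split i)).

Lemma prodfun_inj a b (u : 'S_a) (v : 'S_b) : injective (prodfun u v).
Proof.
move=> i j /(can_inj unsplitK) H; apply: (can_inj splitK).
move: H; rewrite /sumf.
case: (split i) => x; case: (split j) => y // [] /perm_inj -> //.
Qed.

Definition prodperm a b (u : 'S_a) (v : 'S_b) : 'S_(a + b) :=
  perm (@prodfun_inj a b u v).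

(* gamma_{a,b}(Y_u (x) Y_v) = Y_{(u,v)} in A_(a+b), transported to A_N
   along E : a + b = N. *)
Definition gammaY (a b N : nat) (E : (a + b)%N = N) (u : 'S_a) (v : 'S_b) : A N :=
  Y (cast_perm E (prodperm u v)).

Definition young (a b N : nat) (E : (a + b)%N = N) : {set 'S_N} :=
  [set cast_perm E (prodperm p.1 p.2) | p : 'S_a * 'S_b].

Definition dcoset (n m k l N : nat) (En : (n + m)%N = N) (Ek : (k + l)%N = N)
    (w : 'S_N) : {set 'S_N} :=
  [set (u * w * v)%g | u in young Ek, v in young En].

Definition minreps (n m k l N : nat) (En : (n + m)%N = N) (Ek : (k + l)%N = N)
    : {set 'S_N} :=
  [set w : 'S_N | [forall u in dcoset En Ek w, (len w <= len u)%N]].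

(* The sub-(A_k (x) A_l, A_n (x) A_m)-bimodule of A_N generated by x:
   the Q-span of all gamma_{k,l}(a) x gamma_{n,m}(b), which by bilinearity
   is the span over basis elements a = Y_u1 (x) Y_u2, b = Y_v1 (x) Y_v2. *)
Definition subbimod (n m k l N : nat) (En : (n + m)%N = N) (Ek : (k + l)%N = N)
    (x : A N) : {vspace A N} :=
  <<[seq mulA (mulA (gammaY Ek p.1.1 p.1.2) x) (gammaY En p.2.1 p.2.2)
     | p <- enum [set: (('S_k * 'S_l) * ('S_n * 'S_m))%type]]>>%VS.

(* Main.v *)
Require Import Defs.
From HB Require Import structures.
From mathcomp Require Import all_boot all_order all_fingroup all_algebra.
From mathcomp Require Import zify.
From Stdlib Require Import Lia.
Set Implicit Arguments. Unset Strict Implicit. Unset Printing Implicit Defensive.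

Definition inv N (s : 'S_N) :=
  [set p : 'I_N * 'I_N | (p.1 < p.2)%N && (s p.2 < s p.1)%N].

Lemma lenE N (s : 'S_N) : len s = #|inv s|. Proof. by []. Qed.

Lemma lenM N (s t : 'S_N) :
  (forall i j : 'I_N, (i < j)%N -> (s j < s i)%N -> (t (s j) < t (s i))%N) ->
  len (s * t)%g = (len s + len t)%N.
Proof.
move=> H.
pose g := fun p : 'I_N * 'I_N => ((s^-1)%g p.1, (s^-1)%g p.2).
rewrite !lenE.
have ginj : injective g.
  by move=> [a b] [c d] [] /perm_inj -> /perm_inj ->.
have -> : inv (s * t)%g = inv s :|: g @: inv t.
  apply/setP => -[i j]; rewrite !inE /= !permM.
  apply/idP/idP.
  - move=> /andP [ij tij].
    case: (ltngtP (s i) (s j)) => [sij|sji|/val_inj/perm_inj e].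
    + apply/orP; right; apply/imsetP; exists (s i, s j).
        by rewrite inE /= sij tij.
      by rewrite /g /= !permK.
    + by rewrite ij.
    + by rewrite e ltnn in ij.
  - case/orP => [/andP [ij sji]| /imsetP [[a b]]].
    + by rewrite ij (H _ _ ij sji).
    + rewrite inE /= => /andP [ab tba] [-> ->].
      rewrite !permKV tba andbT.
      case: (ltngtP ((s^-1)%g a) ((s^-1)%g b)) => // [ba|/val_inj/perm_inj e].
      * have := H _ _ ba; rewrite !permKV => /(_ ab) tab.
        by move: (ltn_trans tab tba); rewrite ltnn.
      * by rewrite e ltnn in ab.
rewrite cardsU (card_imset _ ginj).
suff -> : inv s :&: g @: inv t = set0 by rewrite cards0 subn0.
apply/setP => -[i j]; rewrite !inE /=.
apply/negbTE/negP => /andP [/andP [ij sji] /imsetP [[a b]]].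
rewrite inE /= => /andP [ab _] [ea eb].
by move: sji; rewrite ea eb !permKV => /(ltn_trans ab); rewrite ltnn.
Qed.
Definition YL N b : {set 'S_N} := [set s : 'S_N | [forall i, (s i < b) == (i < b)]].

Lemma YLP N b (s : 'S_N) : reflect (forall i, (s i < b) = (i < b)) (s \in YL N b).
Proof. rewrite inE; apply: (iffP forallP) => H i; [exact: (eqP (H i)) | by rewrite H]. Qed.

Lemma YL1 N b : (1%g : 'S_N) \in YL N b.
Proof. by apply/YLP => i; rewrite perm1. Qed.

Lemma YLM N b (s t : 'S_N) : s \in YL N b -> t \in YL N b -> (s * t)%g \in YL N b.
Proof. by move=> /YLP hs /YLP ht; apply/YLP => i; rewrite permM ht hs. Qed.

Lemma YLV N b (s : 'S_N) : s \in YL N b -> (s^-1)%g \in YL N b.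
Proof. by move=> /YLP hs; apply/YLP => i; rewrite -{2}(permKV s i) hs. Qed.

Lemma YL_tperm N b (c0 c1 : 'I_N) : (c0 < b) = (c1 < b) -> tperm c0 c1 \in YL N b.
Proof.
move=> h; apply/YLP => i; case: tpermP => [->|->|] //.
Qed.

Lemma tpermV' N (c0 c1 x : 'I_N) :
  (tperm c0 c1 x : nat) = if (x == c0 :> nat) then (c1 : nat) else if (x == c1 :> nat) then (c0 : nat) else (x : nat).
Proof.
case: tpermP => [->|->|h0 h1]; rewrite ?eqxx //.
- by case: eqP => [->|].
- by move/eqP: h0; move/eqP: h1; rewrite !val_eqE => /negbTE -> /negbTE ->.
Qed.

Lemma tperm_adj N (c0 c1 a b : 'I_N) : (c1 : nat) = (c0 : nat).+1 -> (b < a)%N ->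
  ~~ ((a == c1) && (b == c0)) -> (tperm c0 c1 b < tperm c0 c1 a)%N.
Proof.
rewrite -!val_eqE !tpermV' /= => e ba.
case: (a =P c1 :> nat); case: (b =P c0 :> nat); case: (a =P c0 :> nat);
  case: (b =P c1 :> nat) => /=; intros; lia.
Qed.

Definition P1 N b (d : 'S_N) :=
  [forall i : 'I_N, forall j : 'I_N, (i < j) ==> ((i < b) == (j < b)) ==> (d i < d j)].
Definition P2 N b (d : 'S_N) :=
  [forall i : 'I_N, forall j : 'I_N, (i < j) ==> ((d i < b) == (d j < b)) ==> (d i < d j)].

Lemma P1P N b (d : 'S_N) :
  reflect (forall i j : 'I_N, i < j -> (i < b) = (j < b) -> d i < d j) (P1 b d).
Proof.
apply: (iffP forallP) => [H i j ij e | H i].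
  by move/forallP/(_ j)/implyP/(_ ij)/implyP: (H i); apply; rewrite e.
by apply/forallP => j; apply/implyP => ij; apply/implyP => /eqP e; apply: H.
Qed.

Lemma P2P N b (d : 'S_N) :
  reflect (forall i j : 'I_N, i < j -> (d i < b) = (d j < b) -> d i < d j) (P2 b d).
Proof.
apply: (iffP forallP) => [H i j ij e | H i].
  by move/forallP/(_ j)/implyP/(_ ij)/implyP: (H i); apply; rewrite e.
by apply/forallP => j; apply/implyP => ij; apply/implyP => /eqP e; apply: H.
Qed.

Lemma descent (f : nat -> nat) a b : a < b -> f b < f a ->
  exists c, a <= c < b /\ f c.+1 < f c.
Proof.
elim: b => // b IH; rewrite ltnS leq_eqVlt => /orP [/eqP <-|ab] fb.
  by exists a; rewrite leqnn ltnSn.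
case: (ltnP (f b.+1) (f b)) => h.
  by exists b; rewrite ltnSn andbT; split => //; apply: ltnW.
have [c [hc hf]] := IH ab (leq_ltn_trans h fb).
by exists c; split => //; lia.
Qed.

Lemma perm_neq_lt N (x : 'S_N) (i j : 'I_N) : i < j -> ~~ (x i < x j) -> x j < x i.
Proof.
move=> ij; rewrite -leqNgt leq_eqVlt => /orP [/eqP e|//].
by move/val_inj/perm_inj: e => e; rewrite e ltnn in ij.
Qed.

Lemma right_dec N b (x : 'S_N) :
  exists y v, [/\ v \in YL N b, P2 b y & x = (y * v)%g].
Proof.
move: {2}(len x).+1 (ltnSn (len x)) => L; elim: L x => // L IH x hx.
case: (boolP (P2 b x)) => hP.
  by exists x, 1%g; split; [exact: YL1 | exact: hP | rewrite mulg1].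
have [i [j [ij eb nlt]]] : exists i j : 'I_N,
    [/\ i < j, (x i < b) = (x j < b) & x j < x i].
  case/forallPn: hP => i /forallPn [j]; rewrite !negb_imply => /and3P [ij /eqP e nl].
  by exists i, j; split => //; apply: perm_neq_lt.
pose f := fun c => nat_of_ord ((x^-1)%g (insubd i c)).
have fx : forall p, f (x p) = p by move=> p; rewrite /f valKd permK.
have [c [hc hf]] : exists c, x j <= c < x i /\ f c.+1 < f c.
  by apply: descent; rewrite ?fx.
have cN : c.+1 < N by move: (ltn_ord (x i)); lia.
pose c0 : 'I_N := insubd i c; pose c1 : 'I_N := insubd i c.+1.
have vc0 : (c0 : nat) = c by rewrite /c0 val_insubd ifT //; lia.
have vc1 : (c1 : nat) = c.+1 by rewrite /c1 val_insubd ifT.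
pose s := tperm c0 c1.
have sY : s \in YL N b.
  apply: YL_tperm; rewrite vc0 vc1.
  move: eb; case: (ltnP (x i) b); case: (ltnP (x j) b) => //=; lia.
pose x' := (x * s)%g.
have hx' : x = (x' * s)%g by rewrite /x' -mulgA tperm2 mulg1.
have lx : len x = len x' + len s.
  rewrite {1}hx'; apply: lenM => i' j' ij' lt'.
  apply: tperm_adj; rewrite ?vc0 ?vc1 //.
  apply/negP => /andP [/eqP e1 /eqP e2].
  have ei : x i' = c0 by rewrite hx' permM e1 /s tpermR.
  have ej : x j' = c1 by rewrite hx' permM e2 /s tpermL.
  move: hf; rewrite /f -vc1 -vc0 !valKd -ei -ej !permK; lia.
have ls : 0 < len s.
  rewrite lenE card_gt0; apply/set0Pn; exists (c0, c1).
  by rewrite inE /= /s tpermL tpermR vc0 vc1 ltnSn.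
have [y [v [vY Py ex']]] := IH x' ltac:(lia).
exists y, (v * s)%g; split => //; first exact: YLM.
by rewrite hx' ex' mulgA.
Qed.

Lemma P2_P1V N b (y : 'S_N) : P2 b y -> P1 b (y^-1)%g.
Proof.
move/P2P => H; apply/P1P => i j ij e.
case: (ltngtP ((y^-1)%g i) ((y^-1)%g j)) => // [h|/val_inj/perm_inj e'].
  by have := H _ _ h; rewrite !permKV e => /(_ erefl) /(ltn_trans ij); rewrite ltnn.
by rewrite e' ltnn in ij.
Qed.

Lemma left_dec N b (y : 'S_N) :
  exists u d, [/\ u \in YL N b, P1 b d & y = (u * d)%g].
Proof.
have [y0 [v [vY Py y0e]]] := right_dec b (y^-1)%g.
exists (v^-1)%g, (y0^-1)%g; split; [exact: YLV | exact: P2_P1V |].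
by rewrite -[y]invgK y0e invMg.
Qed.

Lemma decomp N n k (x : 'S_N) : exists u d v,
  [/\ u \in YL N k, v \in YL N n, P1 k d, P2 n d &
   [/\ x = (u * d * v)%g, len (u * d)%g = len u + len d &
       len (u * d * v)%g = len (u * d)%g + len v]].
Proof.
have [y [v [vY Py ->]]] := right_dec n x.
have [u [d [uY Pd ye]]] := left_dec k y.
move/YLP: (uY) => uB; move/YLP: (vY) => vB.
move/P1P: (Pd) => P1d; move/P2P: (Py) => P2y.
have P2d : P2 n d.
  apply/P2P => i j ij e.
  have de : d = ((u^-1)%g * y)%g by rewrite ye mulKg.
  case: (boolP ((i < k) == (j < k))) => [/eqP|] eij; first exact: P1d.
  rewrite de !permM; apply: P2y; last by move: e; rewrite de !permM.
  have uik : ((u^-1)%g i < k) = (i < k) by rewrite -{2}(permKV u i) uB.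
  have ujk : ((u^-1)%g j < k) = (j < k) by rewrite -{2}(permKV u j) uB.
  move: eij; rewrite -uik -ujk.
  case: (ltngtP ((u^-1)%g i) ((u^-1)%g j)) => // [h|/val_inj -> ]; last by rewrite eqxx.
  rewrite uik ujk; move: ij h; case: (ltnP i k); case: (ltnP j k) => //=; lia.
exists u, d, v; split => //; split; first by rewrite ye.
- apply: lenM => i j ij uji.
  apply: P1d => //.
  have := uB i; have := uB j; move: ij uji; case: (ltnP i k); case: (ltnP j k);
    case: (ltnP (u i) k); case: (ltnP (u j) k) => //=; lia.
- rewrite -ye; apply: lenM => i j ij yji.
  have hne : (y i < n) != (y j < n).
    by apply/negP => /eqP e; move: (P2y _ _ ij e) => /(ltn_trans yji); rewrite ltnn.
  have := vB (y i); have := vB (y j); move: hne yji.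
  case: (ltnP (y i) n); case: (ltnP (y j) n);
    case: (ltnP (v (y i)) n); case: (ltnP (v (y j)) n) => //=; lia.
Qed.

Lemma card_interval N a b : b <= N -> #|[set i : 'I_N | a <= i < b]| = b - a.
Proof.
elim: b => [_|b IH bN].
  by rewrite (_ : [set i : 'I_N | a <= i < 0] = set0) ?cards0 //; apply/setP => i; rewrite !inE andbF.
have bN' : b < N by [].
case: (leqP a b) => ab.
  rewrite (_ : [set i : 'I_N | a <= i < b.+1] = Ordinal bN' |: [set i : 'I_N | a <= i < b]).
    rewrite cardsU1 IH ?(ltnW bN) // inE /= ltnn andbF /=; lia.
  apply/setP => i; rewrite !inE -val_eqE /= ltnS (leq_eqVlt i b).
  case: (i =P b :> nat) => [->|] /=; first by rewrite ab.
  by rewrite andbC.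
rewrite (_ : [set i : 'I_N | a <= i < b.+1] = [set i : 'I_N | a <= i < b]).
  rewrite IH ?(ltnW bN) //; lia.
apply/setP => i; rewrite !inE; case: (leqP a i) => //= ai; lia.
Qed.

Lemma card_lt N t : t <= N -> #|[set i : 'I_N | i < t]| = t.
Proof.
move=> tN; rewrite -{2}(subn0 t) -(card_interval 0 tN).
by apply: eq_card => i; rewrite !inE.
Qed.

Lemma card_rank N (x : 'S_N) i : #|[set j | x j < x i]| = x i.
Proof.
rewrite (_ : [set j | x j < x i] = x @^-1: [set c : 'I_N | c < x i]).
  by rewrite card_preimset ?card_lt //; [apply: ltnW | apply: perm_inj].
by apply/setP => j; rewrite !inE.
Qed.

Lemma DC_lt N (B p q : pred 'I_N) (j : 'I_N) :
  (forall i j : 'I_N, i <= j -> B i -> B j -> p j -> p i) ->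
  (forall i j : 'I_N, i <= j -> B i -> B j -> q j -> q i) ->
  B j -> p j -> ~~ q j -> #|[set i | B i && q i]| < #|[set i | B i && p i]|.
Proof.
move=> dp dq Bj pj qj.
apply: (@leq_ltn_trans #|[set i | B i && (i < j)]|).
  apply: subset_leq_card; apply/subsetP => i; rewrite !inE => /andP [Bi qi].
  rewrite Bi /=; rewrite ltnNge; apply/negP => ji.
  by move: qj; rewrite (dq _ _ ji Bj Bi qi).
apply: (@leq_trans #|[set i | B i && (i <= j)]|); last first.
  apply: subset_leq_card; apply/subsetP => i; rewrite !inE => /andP [Bi ij].
  by rewrite Bi (dp _ _ ij Bi Bj pj).
apply: proper_card; apply/properP; split.
  by apply/subsetP => i; rewrite !inE => /andP [-> /ltnW].
by exists j; rewrite !inE ?Bj ?leqnn ?ltnn.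
Qed.

Lemma DC2 N (B p q : pred 'I_N) :
  (forall i j : 'I_N, i <= j -> B i -> B j -> p j -> p i) ->
  (forall i j : 'I_N, i <= j -> B i -> B j -> q j -> q i) ->
  #|[set i | B i && p i]| = #|[set i | B i && q i]| -> forall j, B j -> p j = q j.
Proof.
move=> dp dq e j Bj.
case: (boolP (p j)) => pj; case: (boolP (q j)) => qj //.
  by have := DC_lt dp dq Bj pj qj; rewrite e ltnn.
by have := DC_lt dq dp Bj qj pj; rewrite e ltnn.
Qed.

Lemma cmp_lemma N (x : 'S_N) (i j : 'I_N) :
  (j < i -> x j < x i) -> (i < j -> x i < x j) -> (x j < x i) = (j < i).
Proof.
case: (ltngtP j i) => [h H _|h _ H|/val_inj ->]; first by rewrite H.
  by apply/negbTE; rewrite -leqNgt ltnW // H.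
by rewrite !ltnn.
Qed.

Lemma rank_set N n k (d : 'S_N) i : P1 k d -> P2 n d ->
  [set j | d j < d i] = [set j : 'I_N | ((j < i) && (((j < k) == (i < k)) || ((d j < n) == (d i < n))))
                                || (((j < k) != (i < k)) && (d j < n) && ~~ (d i < n))].
Proof.
move=> /P1P P1d /P2P P2d; apply/setP => j; rewrite !inE.
case: (boolP ((j < k) == (i < k))) => [/eqP e|ne].
  rewrite /= andbT orbF; apply: cmp_lemma => h; apply: P1d => //.
case: (boolP ((d j < n) == (d i < n))) => [/eqP e|ne2].
  rewrite /= andbT; rewrite (cmp_lemma (fun h => P2d _ _ h e) (fun h => P2d _ _ h (esym e))).
  by move: e; case: (d j < n); case: (d i < n) => //= _; rewrite orbF.
rewrite /= andbF /=.
move: ne2; case: (ltnP (d j) n); case: (ltnP (d i) n) => //= a b _; lia.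
Qed.

Lemma P_unique N n k (d d' : 'S_N) : P1 k d -> P2 n d -> P1 k d' -> P2 n d' ->
  (forall c, #|[set j : 'I_N | ((j < k) == c) && (d j < n)]| =
             #|[set j : 'I_N | ((j < k) == c) && (d' j < n)]|) -> d = d'.
Proof.
move=> p1 p2 p1' p2' cnt.
have dc : forall (e : 'S_N) c, P1 k e -> forall i j : 'I_N, i <= j ->
    ((i < k) == c) -> ((j < k) == c) -> (e j < n) -> (e i < n).
  move=> e c /P1P pe i j; rewrite leq_eqVlt => /orP [/eqP/val_inj -> //|ij] /eqP bi /eqP bj ej.
  by apply: ltn_trans (pe _ _ ij _) ej; rewrite bi bj.
have beta : forall j, (d j < n) = (d' j < n).
  move=> j; apply: (@DC2 N (fun x => (x < k) == (j < k)) (fun j => d j < n) (fun j => d' j < n)).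
  - by move=> a b ab Ba Bb; exact: (dc d (j < k) p1 a b ab Ba Bb).
  - by move=> a b ab Ba Bb; exact: (dc d' (j < k) p1' a b ab Ba Bb).
  - exact: cnt.
  - by [].
apply/permP => i; apply/val_inj.
rewrite /= -(card_rank d i) -(card_rank d' i) (rank_set i p1 p2) (rank_set i p1' p2').
by apply: eq_card => j; rewrite !inE !beta.
Qed.

Lemma cnt_inv N n k (x u v : 'S_N) c : u \in YL N k -> v \in YL N n ->
  #|[set j : 'I_N | ((j < k) == c) && ((u * x * v)%g j < n)]| =
  #|[set j : 'I_N | ((j < k) == c) && (x j < n)]|.
Proof.
move=> /YLP uB /YLP vB.
rewrite (_ : [set j : 'I_N | ((j < k) == c) && ((u * x * v)%g j < n)] =
             u @^-1: [set j : 'I_N | ((j < k) == c) && (x j < n)]).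
  by rewrite card_preimset //; apply: perm_inj.
by apply/setP => j; rewrite !inE !permM vB uB.
Qed.

Lemma prodperm_lt a b (u : 'S_a) (v : 'S_b) j : (prodperm u v j < a) = (j < a).
Proof.
rewrite /prodperm permE /prodfun; case: (splitP j) => j' ej /=; first exact: ltn_ord.
by rewrite ltnNge leq_addr.
Qed.

Lemma young_YL a b N (E : (a + b)%N = N) : young E = YL N a.
Proof.
apply/setP => s; apply/idP/idP.
  case/imsetP => -[u v] _ ->; apply/YLP => i.
  by rewrite cast_permE /= prodperm_lt.
move/YLP => sB.
have hu : forall j : 'I_a, s (cast_ord E (lshift b j)) < a.
  by move=> j; rewrite sB /= ltn_ord.
pose uf j := Ordinal (hu j).
have uinj : injective uf.
  move=> j j' /(congr1 val) /= /val_inj /perm_inj /(congr1 val) /= e.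
  exact: val_inj.
have hv : forall j : 'I_b, s (cast_ord E (rshift a j)) - a < b.
  move=> j; have := sB (cast_ord E (rshift a j)); rewrite /= [a + j < a]ltnNge leq_addr /=.
  move: (ltn_ord (s (cast_ord E (rshift a j)))) => h1 /negbT; rewrite -leqNgt; lia.
pose vf j := Ordinal (hv j).
have vinj : injective vf.
  move=> j j' /(congr1 val) /= e.
  have ge : forall j, a <= s (cast_ord E (rshift a j)).
    by move=> j0; have := sB (cast_ord E (rshift a j0)); rewrite /= [a + _ < a]ltnNge leq_addr /= => /negbT; rewrite -leqNgt.
  have := ge j; have := ge j'; move: e => e h1 h2.
  have : s (cast_ord E (rshift a j)) = s (cast_ord E (rshift a j')) :> nat by lia.
  move/val_inj/perm_inj/(congr1 val) => /= e2; apply: ord_inj; lia.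
apply/imsetP; exists (perm uinj, perm vinj) => //.
apply/permP => i; apply/val_inj; rewrite cast_permE /= /prodperm permE /prodfun.
case: (splitP (cast_ord (esym E) i)) => j ej /=; rewrite permE /=.
  by congr (nat_of_ord (s _)); apply: val_inj; rewrite /= -ej.
have ge : a <= s (cast_ord E (rshift a j)).
  by have := sB (cast_ord E (rshift a j)); rewrite /= [a + _ < a]ltnNge leq_addr /= => /negbT; rewrite -leqNgt.
rewrite subnKC //.
by congr (nat_of_ord (s _)); apply: val_inj; rewrite /= -ej.
Qed.

Definition gfun (n k t i : nat) : nat :=
  if i < k then (if i < t then i else n + i - t)
  else (if i < k + n - t then t + i - k else i).

Ltac gsolve := rewrite /gfun; repeat (case: ifP); intros; lia.


Lemma g_bound n m k l t i : k + l = n + m -> k - m <= t -> t <= minn k n ->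
  i < n + m -> gfun n k t i < n + m.
Proof. move=> E h1 h2; gsolve. Qed.

Lemma g_inj n m k l t i j : k + l = n + m -> k - m <= t -> t <= minn k n ->
  i < n + m -> j < n + m -> gfun n k t i = gfun n k t j -> i = j.
Proof. move=> E h1 h2 hi hj; gsolve. Qed.

Lemma g_P1 n m k l t i j : k + l = n + m -> k - m <= t -> t <= minn k n ->
  i < j -> (i < k) = (j < k) -> gfun n k t i < gfun n k t j.
Proof. move=> E h1 h2 ij; gsolve. Qed.

Lemma g_P2 n m k l t i j : k + l = n + m -> k - m <= t -> t <= minn k n ->
  i < j -> (gfun n k t i < n) = (gfun n k t j < n) -> gfun n k t i < gfun n k t j.
Proof. move=> E h1 h2 ij; gsolve. Qed.

Lemma g_cnt n m k l t i : k + l = n + m -> k - m <= t -> t <= minn k n ->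
  ((i < k) && (gfun n k t i < n)) = (i < t).
Proof. move=> E h1 h2; gsolve. Qed.

Definition cnt N n k (d : 'S_N) (c : bool) :=
  #|[set j : 'I_N | ((j < k) == c) && (d j < n)]|.

Lemma len0 N (s : 'S_N) : len s = 0 -> s = 1%g.
Proof.
move=> l0.
have inc : forall (f : 'S_N), (forall i j : 'I_N, i < j -> f i < f j) ->
    forall i : 'I_N, i <= f i.
  move=> f H.
  suff : forall t (i : 'I_N), (i : nat) = t -> t <= f i by move=> h i; exact: h.
  elim => [//|t IH] i ei.
  have tN : t < N by move: (ltn_ord i); lia.
  have := H (Ordinal tN) i; rewrite /= ei ltnSn => /(_ erefl).
  by have := IH (Ordinal tN) erefl; lia.
have sinc : forall i j : 'I_N, i < j -> s i < s j.
  move=> i j ij; apply/negPn/negP => /(perm_neq_lt ij) h.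
  move: l0; rewrite lenE => /eqP; rewrite cards_eq0 => /eqP /setP /(_ (i, j)).
  by rewrite !inE /= ij h.
have svinc : forall i j : 'I_N, i < j -> (s^-1)%g i < (s^-1)%g j.
  move=> i j ij; apply/negPn/negP => /(perm_neq_lt ij) h.
  by have := sinc _ _ h; rewrite !permKV => /(ltn_trans ij); rewrite ltnn.
apply/permP => i; apply/val_inj; rewrite perm1 /=.
have h1 := inc s sinc i; have h2 := inc _ svinc (s i); rewrite permK in h2.
by apply/eqP; rewrite eqn_leq h2 h1.
Qed.

Lemma dcosetE n m k l (E : (k + l)%N = (n + m)%N) (w : 'S_(n + m)) :
  dcoset (erefl (n + m)%N) E w =
  [set (u * w * v)%g | u in YL (n + m) k, v in YL (n + m) n].
Proof. by rewrite /dcoset !young_YL. Qed.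

Lemma minrepsP n m k l (E : (k + l)%N = (n + m)%N) (w : 'S_(n + m)) :
  (w \in minreps (erefl (n + m)%N) E) = P1 k w && P2 n w.
Proof.
rewrite inE dcosetE; apply/forall_inP/idP.
  move=> H.
  have [u [d [v [uY vY p1 p2 [we l1 l2]]]]] := decomp n k w.
  have dIn : d \in [set (u * w * v)%g | u in YL (n + m) k, v in YL (n + m) n].
    apply/imset2P; exists (u^-1)%g (v^-1)%g; rewrite ?YLV //.
    by rewrite we !mulgA mulVg mul1g -mulgA mulgV mulg1.
  have := H _ dIn; rewrite {1}we l2 l1 => hl.
  have u1 : u = 1%g by apply: len0; lia.
  have v1 : v = 1%g by apply: len0; lia.
  by rewrite we u1 v1 mul1g mulg1 p1 p2.
case/andP => p1 p2 z /imset2P [u v uY vY ->].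
have [u' [d [v' [uY' vY' p1' p2' [ze l1 l2]]]]] := decomp n k (u * w * v)%g.
have dw : d = w.
  apply: (P_unique p1' p2' p1 p2) => c.
  rewrite -(cnt_inv d c uY' vY') -ze.
  exact: cnt_inv.
by rewrite ze l2 l1 dw; lia.
Qed.

Lemma cnt_sum N n k (d : 'S_N) : n <= N -> cnt n k d true + cnt n k d false = n.
Proof.
move=> nN.
have cn : #|[set j : 'I_N | d j < n]| = n.
  rewrite (_ : [set j | d j < n] = d @^-1: [set c : 'I_N | c < n]).
    by rewrite card_preimset ?card_lt //; apply: perm_inj.
  by apply/setP => j; rewrite !inE.
rewrite -[X in _ = X]cn -(cardsID [set j : 'I_N | j < k]) /cnt.
by congr (_ + _); apply: eq_card => j; rewrite !inE ?eqb_id ?eqbF_neg andbC.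
Qed.

Lemma cnt_true_le N n k (d : 'S_N) : k <= N -> cnt n k d true <= k.
Proof.
move=> kN; rewrite -{2}(card_lt kN); apply: subset_leq_card.
by apply/subsetP => j; rewrite !inE eqb_id => /andP [].
Qed.

Lemma cnt_false_le N n k (d : 'S_N) : cnt n k d false <= N - k.
Proof.
rewrite -(card_interval k (leqnn N)); apply: subset_leq_card.
apply/subsetP => j; rewrite !inE eqbF_neg -leqNgt ltn_ord andbT => /andP [] //.
Qed.

Lemma exists_rep n m k l (E : (k + l)%N = (n + m)%N) t : k - m <= t -> t <= minn k n ->
  exists d : 'S_(n + m), [/\ P1 k d, P2 n d & cnt n k d true = t].
Proof.
move=> h1 h2.
pose f := fun i : 'I_(n + m) => (insubd i (gfun n k t i) : 'I_(n + m)).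
have fv : forall i, (f i : nat) = gfun n k t i.
  by move=> i; rewrite /f val_insubd (g_bound E h1 h2 (ltn_ord i)).
have finj : injective f.
  by move=> i j /(congr1 val); rewrite /= !fv => /(g_inj E h1 h2 (ltn_ord i) (ltn_ord j)) /ord_inj.
exists (perm finj); split.
- by apply/P1P => i j ij e; rewrite !permE !fv; apply: (g_P1 E h1 h2).
- by apply/P2P => i j; rewrite !permE !fv => ij e; apply: (g_P2 E h1 h2).
- have tN : t <= n + m by move: h2; lia.
  rewrite /cnt -[RHS](@card_lt (n + m) t tN).
  by apply: eq_card => i; rewrite !inE permE fv eqb_id (g_cnt _ E h1 h2).
Qed.

Lemma card_minreps n m k l (E : (k + l)%N = (n + m)%N) :
  #|minreps (erefl (n + m)%N) E| = (minn (minn n m) (minn k l)).+1.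
Proof.
have kN : k <= n + m by lia.
pose rho := fun d : 'S_(n + m) => (inord (cnt n k d true) : 'I_(n + m).+1).
have rhoK : forall d, (rho d : nat) = cnt n k d true.
  by move=> d; rewrite /rho inordK // ltnS; apply: leq_trans (@cnt_true_le (n + m) n k d kN) _.
have cs : forall d : 'S_(n + m), cnt n k d true + cnt n k d false = n.
  by move=> d; apply: cnt_sum; lia.
have inj : {in minreps (erefl (n + m)%N) E &, injective rho}.
  move=> d d'; rewrite !minrepsP => /andP [p1 p2] /andP [p1' p2'] e.
  have et : cnt n k d true = cnt n k d' true by rewrite -!rhoK e.
  apply: (P_unique p1 p2 p1' p2') => -[] //.
  by have := cs d; have := cs d'; rewrite /cnt in et *; lia.
rewrite -(card_in_imset inj).
have -> : rho @: minreps (erefl (n + m)%N) E =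
          [set t : 'I_(n + m).+1 | k - m <= t < (minn k n).+1].
  apply/setP => t; rewrite inE; apply/imsetP/idP.
    case=> d _ ->; rewrite rhoK.
    have := cs d; have := @cnt_true_le (n + m) n k d kN; have := @cnt_false_le (n + m) n k d.
    have E' := E; move: E'; rewrite /cnt; lia.
  move=> /andP [h1 h2].
  have [d [p1 p2 cd]] := exists_rep E h1 h2.
  by exists d; [rewrite minrepsP p1 p2 | apply: val_inj; rewrite /= rhoK cd].
rewrite card_interval; first by lia.
by rewrite ltnS; lia.
Qed.

Import GRing.Theory.
Local Open Scope ring_scope.

Lemma YE N (w x : 'S_N) : Y w x = (x == w)%:R.
Proof. by rewrite ffunE. Qed.

Lemma mulY N (a b : 'S_N) :
  Defs.mulA (Y a) (Y b) = if (len (a * b)%g == len a + len b)%N then Y (a * b)%g else 0.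
Proof.
apply/ffunP => w; rewrite ffunE (bigD1 a) //= [X in _ + X]big1 ?addr0; last first.
  by move=> u ua; apply: big1 => v _; rewrite YE (negbTE ua) mul0r.
rewrite YE eqxx -[true%:R]/(1 : rat^o).
rewrite big_mkcond (bigD1 b) //= [X in _ + X]big1 ?addr0; last first.
  by move=> v vb; rewrite YE (negbTE vb) if_same.
rewrite YE eqxx.
case: (boolP (a * b == w)%g) => [/eqP <-|abw] /=.
  by case: ifP => _; rewrite ?ffunE ?YE ?eqxx.
case: ifP => _; rewrite ?ffunE ?YE //.
by rewrite eq_sym (negbTE abw).
Qed.

Lemma mul0A N (y : A N) : Defs.mulA 0 y = 0.
Proof.
by apply/ffunP => w; rewrite !ffunE big1 // => u _; rewrite big1 // => v _; rewrite ffunE mul0r.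
Qed.

Lemma dcoset_cnt n m k l (E : (k + l)%N = (n + m)%N) (w x : 'S_(n + m)) c :
  x \in dcoset (erefl (n + m)%N) E w -> cnt n k x c = cnt n k w c.
Proof.
by rewrite dcosetE => /imset2P [u v uY vY ->]; rewrite /cnt cnt_inv.
Qed.

Lemma coset_uniq n m k l (E : (k + l)%N = (n + m)%N) (i w x : 'S_(n + m)) :
  i \in minreps (erefl (n + m)%N) E -> w \in minreps (erefl (n + m)%N) E ->
  x \in dcoset (erefl (n + m)%N) E i -> x \in dcoset (erefl (n + m)%N) E w -> i = w.
Proof.
rewrite !minrepsP => /andP [p1 p2] /andP [p1' p2'] xi xw.
apply: (P_unique p1 p2 p1' p2') => c.
by have := dcoset_cnt c xi; have := dcoset_cnt c xw; rewrite /cnt => -> ->.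
Qed.

Lemma gammaY_young a b N (E : (a + b)%N = N) (u : 'S_a) (v : 'S_b) :
  exists2 s, s \in YL N a & gammaY E u v = Y s.
Proof.
by exists (cast_perm E (prodperm u v)); rewrite // -(young_YL E); apply/imsetP; exists (u, v).
Qed.

Lemma subbimod_supp n m k l (E : (k + l)%N = (n + m)%N) (w : 'S_(n + m)) f :
  f \in subbimod (erefl (n + m)%N) E (Y w) ->
  forall x, x \notin dcoset (erefl (n + m)%N) E w -> f x = 0.
Proof.
move=> hf x hx.
rewrite /subbimod in hf; set s := [seq _ | _ <- _] in hf.
have gen : forall g, g \in s -> g x = 0.
  move=> g /mapP [[[a1 a2] [b1 b2]] _ ->] /=.
  have [u uY ->] := gammaY_young E a1 a2.
  have [v vY ->] := gammaY_young (erefl (n + m)%N) b1 b2.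
  rewrite mulY; case: ifP => _; last by rewrite mul0A ffunE.
  rewrite mulY; case: ifP => _; last by rewrite ffunE.
  rewrite YE; case: eqP => // ex; move: hx; rewrite dcosetE ex.
  by move/negP; case; apply/imset2P; exists u v.
rewrite (coord_span (X := in_tuple s) hf) sum_ffunE big1 // => i _.
rewrite ffunE gen ?scaler0 //.
exact: mem_nth.
Qed.

Lemma Y_in_sum n m k l (E : (k + l)%N = (n + m)%N) (x : 'S_(n + m)) :
  Y x \in (\sum_(w in minreps (erefl (n + m)%N) E)
             subbimod (erefl (n + m)%N) E (Y w))%VS.
Proof.
have [u [d [v [uY vY p1 p2 [xe l1 l2]]]]] := decomp n k x.
have dm : d \in minreps (erefl (n + m)%N) E by rewrite minrepsP p1 p2.
apply: (subvP (sumv_sup d _ (subvv _))) => //.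
rewrite -(young_YL E) in uY; rewrite -(young_YL (erefl (n + m)%N)) in vY.
case/imsetP: uY => -[a1 a2] _ ue; case/imsetP: vY => -[b1 b2] _ ve.
apply: memv_span; apply/mapP; exists ((a1, a2), (b1, b2)); first by rewrite mem_enum inE.
rewrite /= /gammaY -ue -ve mulY l1 eqxx mulY l2 eqxx.
by rewrite xe.
Qed.

Lemma ffun_decomp N (f : A N) : f = \sum_x f x *: Y x.
Proof.
apply/ffunP => w; rewrite sum_ffunE (bigD1 w) //= [X in _ + X]big1 ?addr0.
  by rewrite ffunE YE eqxx; exact: (esym (mulr1 _)).
by move=> x xw; rewrite ffunE YE eq_sym (negbTE xw); exact: (mulr0 _).
Qed.

Theorem mainTheorem15 (n m k l : nat) (E : (k + l)%N = (n + m)%N) :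
  #|minreps (erefl (n + m)%N) E| = (minn (minn n m) (minn k l)).+1 /\
  (\sum_(w in minreps (erefl (n + m)%N) E)
      subbimod (erefl (n + m)%N) E (Y w))%VS = fullv /\
  directv (\sum_(w in minreps (erefl (n + m)%N) E)
      subbimod (erefl (n + m)%N) E (Y w))%VS.
Proof.
split; first exact: card_minreps.
split.
  apply/eqP; rewrite eqEsubv subvf /=; apply/subvP => f _.
  rewrite (ffun_decomp f); apply: memv_suml => x _; apply: memvZ.
  exact: Y_in_sum.
apply/directv_sum_independent => us hus s0 w hw.
apply/ffunP => x; rewrite ffunE.
case: (boolP (x \in dcoset (erefl (n + m)%N) E w)) => hx; last first.
  exact: (subbimod_supp (hus w hw) hx).
have := congr1 (fun f : A (n + m) => f x) s0.
rewrite /= sum_ffunE ffunE (bigD1 w) //= big1 ?addr0 // => i /andP [hi iw].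
apply: (subbimod_supp (hus i hi)); apply/negP => hxi.
by move: iw; rewrite (coset_uniq hi hw hxi hx) eqxx.
Qed.
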